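(* Let $\Lambda$ be a $\mathbb Z$-lattice with an automorphism $M_h$ of finite order. Let $\Lambda^{(1)},\dots,\Lambda^{(k)}\subset\Lambda$ be Orlik blocks with cyclic generators $e^{(1)},\dots,e^{(k)}$ such that $\Lambda^{(1)}+\dots+\Lambda^{(k)}=\Lambda^{(1)}\oplus\dots\oplus\Lambda^{(k)}$, and let $g$ be an automorphism of $\Lambda^{(1)}\oplus\dots\oplus\Lambda^{(k)}$ commuting with $M_h$. Then there are unique polynomials $p_{ij}\in\mathbb Z[t]$ of degree $<\mathrm{rank}\,\Lambda^{(i)}$ with $g(e^{(j)})=\sum_{i=1}^kp_{ij}(M_h)(e^{(i)})$. Suppose moreover that $p_0\in\mathbb Z[t]$ divides $\gcd(p_{\Lambda^{(1)}},\dots,p_{\Lambda^{(k)}})$ and that $g=\mathrm{id}$ on $\Lambda^{(j)}_{p_{\Lambda^{(j)}}/p_0}$ for every $j$. Then $p_{ij}=\delta_{ij}+\frac{p_{\Lambda^{(i)}}}{p_0}q_{ij}$ for suitable $q_{ij}\in\mathbb Z[t]$ of degree $<\deg p_0$. If furthermore $\xi$ is a root of unity with $p_0(\xi)=0$, then with respect to the eigenvectors $v(e^{(j)},\xi)\in\Lambda^{(j)}_\xi$, $$g(v(e^{(j)},\xi))=\sum_{i=1}^k\Bigl(\delta_{ij}+\frac{p_{\Lambda^{(j)}}}{p_0}q_{ij}\Bigr)(\xi)\cdot v(e^{(i)},\xi).$$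
   Context: An Orlik block is a nonzero primitive $M_h$-invariant sublattice $\Lambda^{(1)}\subset\Lambda$ with a cyclic generator $e^{(1)}$, i.e. $\Lambda^{(1)}=\bigoplus_{j=0}^{\deg p_{\Lambda^{(1)}}-1}\mathbb ZM_h^j(e^{(1)})$, where $p_{\Lambda^{(1)}}$ is the characteristic polynomial of $M_h$ on $\Lambda^{(1)}$. For an $M_h$-invariant sublattice $B$ and a product $p$ of cyclotomic polynomials dividing $p_B$, $B_p:=(\bigoplus_{\lambda:p(\lambda)=0}B_\lambda)\cap B$, where $B_\lambda=\ker(M_h-\lambda)\subset B\otimes\mathbb C$. For an eigenvalue $\lambda$ of $M_h$ on an Orlik block with generator $e$, $v(e,\lambda):=\frac{p_{\Lambda^{(1)}}}{t-\lambda}(M_h)(e)$ (an eigenvector with eigenvalue $\lambda$). *)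

(* Defs.v *)
From HB Require Import structures.
From mathcomp Require Import all_boot all_order all_algebra.
From mathcomp Require Import algC.
Set Implicit Arguments. Unset Strict Implicit. Unset Printing Implicit Defensive.
Import Order.TTheory GRing.Theory Num.Theory.
Local Open Scope ring_scope.

(* Conventions: the lattice Lambda is Z^n, elements are row vectors
   'rV[int]_n, and an endomorphism acts on the right: v |-> v *m M. *)

Definition toQ (z : int) : rat := z%:~R.
Definition toC (z : int) : algC := z%:~R.

Definition polyact (R : comNzRingType) (n : nat) (M : 'M[R]_n) (p : {poly R})
  (v : 'rV[R]_n) : 'rV[R]_n :=
  \sum_(m < size p) p`_m *: (v *m M ^+ m).

Definition cycmx (n d : nat) (M : 'M[int]_n) (e : 'rV[int]_n) : 'M[int]_(d, n) :=
  \matrix_(j < d) (e *m M ^+ j).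

Definition in_zspan (n d : nat) (B : 'M[int]_(d, n)) (v : 'rV[int]_n) : Prop :=
  exists c : 'rV[int]_d, v = c *m B.

(* Orlik block with cyclic generator e, of rank d, on which M acts through
   the matrix C (in the basis e, Me, ..., M^(d-1) e):
   nonzero, the M^j e (j<d) are linearly independent, the span is
   M-invariant (E M = C E), and it is primitive: (B tensor Q) cap Lambda = B. *)
Definition orlik_block (n d : nat) (M : 'M[int]_n) (e : 'rV[int]_n)
  (C : 'M[int]_d) : Prop :=
  let E := cycmx d M e in
  [/\ (0 < d)%N,
      row_free (map_mx toQ E),
      E *m M = C *m E &
      forall v : 'rV[int]_n, (map_mx toQ v <= map_mx toQ E)%MS -> in_zspan E v].

Definition pLam (d : nat) (C : 'M[int]_d) : {poly int} := char_poly C.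

(* v lies in B_p = (\bigoplus_{lambda : p(lambda)=0} B_lambda) cap B,
   where B_lambda = ker (M - lambda) in B tensor C. *)
Definition in_Bp (n d : nat) (M : 'M[int]_n) (B : 'M[int]_(d, n))
  (p : {poly int}) (v : 'rV[int]_n) : Prop :=
  in_zspan B v /\
  exists (sl : seq algC) (w : algC -> 'rV[algC]_n),
    (forall l, l \in sl ->
       [/\ root (map_poly toC p) l,
           (w l <= map_mx toC B)%MS &
           w l *m map_mx toC M = l *: w l]) /\
    map_mx toC v = \sum_(l <- sl) w l.

Definition veig (n : nat) (M : 'M[int]_n) (pB : {poly int}) (e : 'rV[int]_n)
  (l : algC) : 'rV[algC]_n :=
  polyact (map_mx toC M) (map_poly toC pB %/ ('X - l%:P)) (map_mx toC e).

(* Main.v *)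
Require Import Defs.
From HB Require Import structures.
From mathcomp Require Import all_boot all_order all_algebra.
From mathcomp Require Import algC.
Set Implicit Arguments. Unset Strict Implicit. Unset Printing Implicit Defensive.
Import Order.TTheory GRing.Theory Num.Theory.
Local Open Scope ring_scope.
From mathcomp Require Import cyclotomic.
From Stdlib Require Import ClassicalEpsilon FunctionalExtensionality.
From mathcomp Require Import ring zify.

Lemma polyactE (R : comNzRingType) n' (M : 'M[R]_n'.+1) p v :
  polyact M p v = v *m horner_mx M p.
Proof.
have -> : horner_mx M p = horner_mx M (\poly_(i < size p) p`_i) by rewrite coefK.
rewrite /polyact poly_def rmorph_sum mulmx_sumr; apply: eq_bigr => i _.
by rewrite -mul_polyC rmorphM /= horner_mx_C rmorphXn /= horner_mx_X -mulmxE mul_scalar_mx scalemxAr.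
Qed.

Lemma poly_small (R : nzRingType) d (p : {poly R}) :
  (size p <= d)%N -> p = \poly_(i < d) p`_i.
Proof.
move=> Hs; apply/polyP => i; rewrite coef_poly; case: ltnP => // Hi.
by rewrite nth_default // (leq_trans Hs Hi).
Qed.

Lemma hm_cyc n' d (M : 'M[int]_n'.+1) (e : 'rV[int]_n'.+1) (p : {poly int}) : (size p <= d)%N ->
  e *m horner_mx M p = poly_rV p *m cycmx d M e.
Proof.
move=> Hs; rewrite {1}(poly_small Hs) poly_def rmorph_sum mulmx_sumr mulmx_sum_row.
apply: eq_bigr => i _; rewrite -mul_polyC rmorphM /= horner_mx_C rmorphXn /= horner_mx_X -mulmxE mul_scalar_mx.
by rewrite -scalemxAr rowK !mxE.
Qed.

Lemma cyc_hm n' d (M : 'M[int]_n'.+1) (e : 'rV[int]_n'.+1) (c : 'rV[int]_d) :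
  c *m cycmx d M e = e *m horner_mx M (rVpoly c).
Proof. by rewrite (hm_cyc _ _ (size_poly _ _)) rVpolyK. Qed.

Lemma hm_comm n' d (R : comNzRingType) (M : 'M[R]_n'.+1) (C : 'M[R]_d.+1) E p :
  E *m M = C *m E -> E *m horner_mx M p = horner_mx C p *m E.
Proof.
move=> HE; elim/poly_ind: p => [|p c IH]; first by rewrite !rmorph0 mulmx0 mul0mx.
rewrite !rmorphD !rmorphM /= !horner_mx_X !horner_mx_C !mulmxDr !mulmxDl.
rewrite -!mulmxE mulmxA IH.
by rewrite -[_ *m E *m M]mulmxA HE mulmxA mul_mx_scalar mul_scalar_mx.
Qed.

Lemma cyc_CH n' d (M : 'M[int]_n'.+1) (e : 'rV[int]_n'.+1) (C : 'M[int]_d) : (0 < d)%N ->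
  cycmx d M e *m M = C *m cycmx d M e -> e *m horner_mx M (char_poly C) = 0.
Proof.
case: d C => // d C _ HE.
have -> : e = row 0 (cycmx d.+1 M e) by rewrite rowK expr0 mulmx1.
by rewrite -row_mul (hm_comm _ HE) Cayley_Hamilton mul0mx row0.
Qed.

Lemma hm_red n' d (M : 'M[int]_n'.+1) (e : 'rV[int]_n'.+1) (C : 'M[int]_d) (r : {poly int}) : (0 < d)%N ->
  cycmx d M e *m M = C *m cycmx d M e ->
  e *m horner_mx M r = poly_rV (r %% char_poly C) *m cycmx d M e.
Proof.
move=> Hd HE; rewrite -hm_cyc; last first.
  by rewrite -ltnS -(size_char_poly C) ltn_modp monic_neq0 // char_poly_monic.
rewrite {1}(Pdiv.IdomainMonic.divp_eq (char_poly_monic C) r) rmorphD rmorphM /=.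
rewrite mulmxDr -(comm_horner_mx2 M (char_poly C)) -mulmxE mulmxA.
by rewrite (cyc_CH Hd HE) mul0mx add0r.
Qed.

Lemma cyc_indep n d (M : 'M[int]_n) (e : 'rV[int]_n) (C : 'M[int]_d) (c : 'rV[int]_d) :
  orlik_block M e C -> c *m cycmx d M e = 0 -> c = 0.
Proof.
case=> _ Hfree _ _ Hc.
have : map_mx toQ c *m map_mx toQ (cycmx d M e) = 0 *m map_mx toQ (cycmx d M e).
  by rewrite mul0mx -(map_mxM (intr : {rmorphism int -> rat})) Hc map_mx0.
move/(row_free_inj Hfree) => H; apply/matrixP => i j.
by have := congr1 (fun A : 'M[rat]_(1, d) => A i j) H; rewrite !mxE /toQ => /eqP; rewrite intr_eq0 => /eqP.
Qed.

Lemma pow_comm n d (R : pzRingType) (M : 'M[R]_n) (C : 'M[R]_d) (E : 'M_(d, n)) t :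
  E *m M = C *m E -> E *m M ^+ t = C ^+ t *m E.
Proof.
move=> HE; elim: t => [|t IH]; first by rewrite !expr0 mulmx1 mul1mx.
by rewrite !exprSr -!mulmxE mulmxA IH -mulmxA HE mulmxA.
Qed.

Lemma map_mxXn (R S : comNzRingType) (f : {rmorphism R -> S}) n' (M : 'M[R]_n'.+1) t :
  map_mx f (M ^+ t) = (map_mx f M) ^+ t.
Proof.
elim: t => [|t IH]; first by rewrite !expr0 map_mx1.
by rewrite !exprS -!mulmxE map_mxM IH.
Qed.

Lemma eig_hm (F : fieldType) n' (A : 'M[F]_n'.+1) (W : 'rV_n'.+1) l q :
  W *m A = l *: W -> W *m horner_mx A q = q.[l] *: W.
Proof.
move=> HW; elim/poly_ind: q => [|q c IH]; first by rewrite rmorph0 mulmx0 horner0 scale0r.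
rewrite rmorphD rmorphM /= horner_mx_X horner_mx_C mulmxDr -mulmxE mulmxA IH.
by rewrite -scalemxAl HW scalerA mul_mx_scalar !hornerE scalerDl.
Qed.

Lemma geom0 (x : algC) m : x ^+ m = 1 -> x != 1 -> \sum_(a < m) x ^+ a = 0.
Proof.
move=> Hm Hx; have := subrX1 x m; rewrite Hm subrr => /esym/eqP.
by rewrite mulf_eq0 subr_eq0 (negbTE Hx) => /eqP.
Qed.

Lemma Bp_lemma n' (M : 'M[int]_n'.+1) m (Hm : (0 < m)%N) (HMm : M ^+ m = 1%:M)
  d (e : 'rV[int]_n'.+1) (C : 'M[int]_d) (Hd : (0 < d)%N)
  (HE : cycmx d M e *m M = C *m cycmx d M e) (s p0 : {poly int})
  (Hsp : char_poly C = s * p0) :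
  in_Bp M (cycmx d M e) s (e *m horner_mx M p0).
Proof.
case: m Hm HMm => // m _ HMm.
split; first by exists (poly_rV (p0 %% char_poly C)); exact: hm_red.
set E := cycmx d M e.
set V := map_mx toC (e *m horner_mx M p0).
set MC := map_mx toC M.
have [z zprim] := C_prim_root_exists (ltn0Sn m).
pose w (l : algC) := (m.+1%:R)^-1 *: \sum_(t < m.+1) (l^-1) ^+ t *: (V *m MC ^+ t).
have MCm : MC ^+ m.+1 = 1.
  by rewrite /MC -(map_mxXn (intr : {rmorphism int -> algC})) HMm map_mx1.
have Fsub l : (w l <= map_mx toC E)%MS.
  apply: scalemx_sub; apply: summx_sub => t _; apply: scalemx_sub.
  rewrite /V (@hm_red _ _ _ _ _ p0 Hd HE) /MC -(map_mxXn (intr : {rmorphism int -> algC})).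
  rewrite -(map_mxM (intr : {rmorphism int -> algC})) -mulmxA (pow_comm _ HE) mulmxA.
  by rewrite (map_mxM (intr : {rmorphism int -> algC})) submxMl.
pose u t := V *m MC ^+ t.
have Feig l : l ^+ m.+1 = 1 -> w l *m MC = l *: w l.
  move=> Hl; have l0 : l != 0.
    by apply/eqP => l0; move: Hl; rewrite l0 expr0n /= => /eqP; rewrite eq_sym oner_eq0.
  rewrite /w -scalemxAl scalerA mulrC -scalerA; congr (_ *: _).
  have key : \sum_(t < m.+1) l^-1 ^+ t.+1 *: u t.+1 = \sum_(t < m.+1) l^-1 ^+ t *: u t.
    pose F (t : nat) := l^-1 ^+ t *: u t.
    have h1 : \sum_(t < m.+2) F t = F 0%N + \sum_(t < m.+1) F t.+1 := big_ord_recl _ _.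
    have h2 : \sum_(t < m.+2) F t = \sum_(t < m.+1) F t + F m.+1 := big_ord_recr _ _.
    have hF : F m.+1 = F 0%N by rewrite /F /u exprVn Hl invr1 MCm !expr0.
    by apply: (addIr (F 0%N)); rewrite addrC -h1 h2 hF.
  rewrite mulmx_suml -key scaler_sumr; apply: eq_bigr => t _.
  rewrite -scalemxAl /u -mulmxA mulmxE -exprSr scalerA [l^-1 ^+ _.+1]exprS mulrA mulfV // mul1r.
  done.
have VS0 : V *m horner_mx MC (map_poly toC s) = 0.
  rewrite /V /MC /toC -(map_horner_mx (intr : {rmorphism int -> algC})).
  rewrite -(map_mxM (intr : {rmorphism int -> algC})) -mulmxA.
  rewrite mulmxE -rmorphM /= mulrC -Hsp.
  by rewrite (cyc_CH Hd HE) map_mx0.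
have Fann l : w l *m horner_mx MC (map_poly toC s) = 0.
  rewrite /w -scalemxAl mulmx_suml big1 ?scaler0 // => t _.
  have cm : comm_mx (MC ^+ t) MC by rewrite /comm_mx mulmxE -exprSr -exprS.
  have := comm_mx_horner (map_poly toC s) cm; rewrite /comm_mx => cm2.
  by rewrite -scalemxAl -mulmxA cm2 mulmxA VS0 mul0mx scaler0.
pose sl := [seq l <- [seq z ^+ a | a <- iota 0 m.+1] | w l != 0].
have zm : z ^+ m.+1 = 1 := prim_expr_order zprim.
exists sl, w; split.
  move=> l; rewrite mem_filter => /andP [wl0 /mapP [a _ Hla]]; subst l.
  have Hl : (z ^+ a) ^+ m.+1 = 1 by rewrite exprAC zm expr1n.
  split; [|exact: Fsub|exact: Feig].
  have := Fann (z ^+ a); rewrite (eig_hm _ (Feig _ Hl)) => /eqP.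
  by rewrite scaler_eq0 (negbTE wl0) orbF.
rewrite /sl big_filter big_rmcond; last by move=> l /negPn /eqP.
rewrite big_map (_ : iota 0 m.+1 = index_iota 0 m.+1) ?subn0 // big_mkord.
rewrite /w -scaler_sumr exchange_big /=.
under eq_bigr => t _ do rewrite -scaler_suml.
rewrite [\sum_(t < m.+1) _ *: _]big_ord_recl [X in _ + X]big1 ?addr0; last first.
  move=> t _; rewrite lift0; set k := t.+1.
  have k0 : (0 < k < m.+1)%N by apply/andP; split => //; rewrite /k ltnS; exact: ltn_ord.
  rewrite (eq_bigr (fun a : 'I_m.+1 => (z^-1 ^+ k) ^+ a)); last first.
    by move=> a _; rewrite -exprVn -!exprM mulnC.
  rewrite geom0 ?scale0r //; first by rewrite exprAC exprVn zm invr1 expr1n.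
  rewrite exprVn invr_eq1 -(prim_order_dvd zprim).
  case/andP: k0 => k0 km; apply/negP => /(dvdn_leq k0); rewrite leqNgt km.
  done.
rewrite (eq_bigr (fun _ => 1)); last by move=> a _; rewrite expr0.
rewrite sumr_const card_ord expr0 mulmx1 scalerA mulVf ?scale1r //.
by rewrite pnatr_eq0.
Qed.
Lemma hm_mod n' d (M : 'M[int]_n'.+1) (e : 'rV[int]_n'.+1) (C : 'M[int]_d) (r : {poly int}) :
  (0 < d)%N -> cycmx d M e *m M = C *m cycmx d M e ->
  e *m horner_mx M r = e *m horner_mx M (r %% char_poly C).
Proof.
move=> Hd HE; rewrite (hm_red r Hd HE) -hm_cyc //.
by rewrite -ltnS -(size_char_poly C) ltn_modp monic_neq0 // char_poly_monic.
Qed.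

Lemma size_mod_char d (C : 'M[int]_d) (r : {poly int}) : (size (r %% char_poly C)%R <= d)%N.
Proof. by rewrite -ltnS -(size_char_poly C) ltn_modp monic_neq0 // char_poly_monic. Qed.

Lemma sum_only (R : comNzRingType) n k (F : 'I_k -> 'rV[R]_n) (j : 'I_k) :
  (forall i, i != j -> F i = 0) -> \sum_(i < k) F i = F j.
Proof. by move=> H0; rewrite (bigD1 j) //= big1 ?addr0. Qed.
Theorem lemma2p7
  (n : nat) (M : 'M[int]_n)
  (* M_h is an automorphism of Lambda = Z^n of finite order *)
  (HMunit : M \in unitmx)
  (HMfin : exists m : nat, (0 < m)%N /\ M ^+ m = 1%:M)
  (k : nat) (d : 'I_k -> nat) (e : 'I_k -> 'rV[int]_n)
  (C : forall i : 'I_k, 'M[int]_(d i))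
  (* Lambda^(i) = Z-span of e_i, ..., M^(d_i - 1) e_i is an Orlik block *)
  (Hblock : forall i : 'I_k, orlik_block M (e i) (C i))
  (* the sum Lambda^(1) + ... + Lambda^(k) is direct *)
  (Hdirect : forall c : forall i : 'I_k, 'rV[int]_(d i),
      \sum_(i < k) c i *m cycmx (d i) M (e i) = 0 ->
      forall i, c i *m cycmx (d i) M (e i) = 0)
  (g : 'rV[int]_n -> 'rV[int]_n) :
  let inL (v : 'rV[int]_n) : Prop :=
    exists c : forall i : 'I_k, 'rV[int]_(d i),
      v = \sum_(i < k) c i *m cycmx (d i) M (e i) in
  (* g is an automorphism of Lambda^(1) + ... + Lambda^(k) commuting with M *)
  (forall u v, inL u -> inL v -> g (u + v) = g u + g v) ->
  (forall v, inL v -> inL (g v)) ->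
  (forall u v, inL u -> inL v -> g u = g v -> u = v) ->
  (forall w, inL w -> exists2 v, inL v & g v = w) ->
  (forall v, inL v -> g (v *m M) = g v *m M) ->
  exists p : 'I_k -> 'I_k -> {poly int},
    [/\ (forall i j, (size (p i j) <= d i)%N),
        (forall j, g (e j) = \sum_(i < k) polyact M (p i j) (e i)),
        (* uniqueness *)
        (forall p' : 'I_k -> 'I_k -> {poly int},
            (forall i j, (size (p' i j) <= d i)%N) ->
            (forall j, g (e j) = \sum_(i < k) polyact M (p' i j) (e i)) ->
            p' = p) &
        (* second part *)
        forall (p0 : {poly int}) (s : 'I_k -> {poly int}),
          (* p0 divides each p_{Lambda^(i)} in Z[t], with quotient s i *)
          (forall i, pLam (C i) = s i * p0) ->
          (* g = id on Lambda^(j)_{p_{Lambda^(j)}/p0} *)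
          (forall j v, in_Bp M (cycmx (d j) M (e j)) (s j) v -> g v = v) ->
          exists q : 'I_k -> 'I_k -> {poly int},
            [/\ (forall i j, (size (q i j) < size p0)%N),
                (forall i j, p i j = (i == j)%:R + s i * q i j) &
                forall xi : algC,
                  (exists m : nat, (0 < m)%N /\ xi ^+ m = 1) ->
                  root (map_poly toC p0) xi ->
                  (* GC : the C-linear extension of g to Lambda tensor C *)
                  forall GC : 'M[algC]_n,
                    (forall v, inL v -> map_mx toC (g v) = map_mx toC v *m GC) ->
                    forall j,
                      veig M (pLam (C j)) (e j) xi *m GC =
                      \sum_(i < k)
                        (map_poly toC ((i == j)%:R + s j * q i j)).[xi]
                          *: veig M (pLam (C i)) (e i) xi]].
Proof.
case: n M HMunit HMfin e Hblock Hdirect g => [|n'] M HMunit HMfin e Hblock Hdirect g.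
  have noI : 'I_k -> False.
    move=> i; case: (Hblock i) => Hd Hfree _ _; move: Hfree; rewrite /row_free => /eqP Hr.
    have := rank_leq_col (map_mx toQ (cycmx (d i) M (e i))).
    by rewrite Hr leqn0 => /eqP Hd0; rewrite Hd0 in Hd.
  move=> inL _ _ _ _ _; exists (fun _ _ => 0); split.
  - by move=> i; case: (noI i).
  - by move=> i; case: (noI i).
  - move=> p' _ _; apply: functional_extensionality => i; case: (noI i).
  move=> p0 s _ _; exists (fun _ _ => 0); split.
  - by move=> i; case: (noI i).
  - by move=> i; case: (noI i).
  by move=> xi _ _ GC _ j; case: (noI j).
move=> inL gD gL ginj gsurj gM.
have Hd i : (0 < d i)%N by case: (Hblock i).
have HE i : cycmx (d i) M (e i) *m M = C i *m cycmx (d i) M (e i) by case: (Hblock i).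
have inLP v : inL v <-> exists P : 'I_k -> {poly int}, v = \sum_(i < k) e i *m horner_mx M (P i).
  split.
    by case=> c ->; exists (fun i => rVpoly (c i)); apply: eq_bigr => i _; rewrite cyc_hm.
  case=> P ->; exists (fun i => poly_rV (P i %% char_poly (C i))).
  by apply: eq_bigr => i _; rewrite (hm_red _ (Hd i) (HE i)).
set hm := horner_mx M.
have inLD u v : inL u -> inL v -> inL (u + v).
  move=> /inLP [P ->] /inLP [Q ->]; apply/inLP; exists (fun i => P i + Q i).
  by rewrite -big_split; apply: eq_bigr => i _; rewrite rmorphD mulmxDr.
have inLhm v q : inL v -> inL (v *m hm q).
  move=> /inLP [P ->]; apply/inLP; exists (fun i => P i * q).
  by rewrite mulmx_suml; apply: eq_bigr => i _; rewrite rmorphM -mulmxE mulmxA.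
have inLZ (c : int) v : inL v -> inL (c *: v).
  move=> Hv; have := inLhm v c%:P Hv; rewrite /hm horner_mx_C mul_mx_scalar //.
have inL0 : inL 0.
  by apply/inLP; exists (fun _ => 0); rewrite big1 // => i _; rewrite rmorph0 mulmx0.
have inLe j : inL (e j).
  apply/inLP; exists (fun i => (i == j)%:R).
  rewrite (sum_only (j:=j)) ?eqxx ?rmorph1 ?mulmx1 // => i /negbTE ->.
  by rewrite rmorph0 mulmx0.
have inLM v : inL v -> inL (v *m M).
  by move=> Hv; have := inLhm v 'X Hv; rewrite /hm horner_mx_X.
have g0 : g 0 = 0.
  by have := gD 0 0 inL0 inL0; rewrite addr0 => H; apply: (addrI (g 0)); rewrite -H addr0.
have gN v : inL v -> g (- v) = - g v.
  move=> Hv; have HvN : inL (- v) by have := inLZ (-1) v Hv; rewrite scaleN1r.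
  by apply: (addrI (g v)); rewrite -gD // !subrr g0.
have gZ (c : int) v : inL v -> g (c *: v) = c *: g v.
  move=> Hv; have gMn (t : nat) : g (v *+ t) = g v *+ t.
    elim: t => [|t IH]; first by rewrite !mulr0n.
    have Hvt : inL (v *+ t) by have := inLZ t%:R v Hv; rewrite scaler_nat.
    by rewrite !mulrS gD ?IH.
  case: c => t; first by rewrite -natz !scaler_nat gMn.
  rewrite NegzE !scaleNr -natz !scaler_nat gN ?gMn //.
  by have := inLZ t.+1%:R v Hv; rewrite scaler_nat.
have ghm v q : inL v -> g (v *m hm q) = g v *m hm q.
  move=> Hv; elim/poly_ind: q => [|q c IH]; first by rewrite /hm !rmorph0 !mulmx0 g0.
  rewrite /hm rmorphD rmorphM /= horner_mx_X horner_mx_C !mulmxDr -!mulmxE !mulmxA.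
  rewrite !mul_mx_scalar gD ?gZ ?gM -?IH //; [exact: inLhm | exact: inLM (inLhm _ _ Hv)|].
  exact: inLZ.
have dz (P : 'I_k -> {poly int}) : \sum_(i < k) e i *m hm (P i) = 0 ->
    forall i, P i %% char_poly (C i) = 0.
  move=> H i.
  have H' : \sum_(l < k) poly_rV (P l %% char_poly (C l)) *m cycmx (d l) M (e l) = 0.
    by rewrite -[RHS]H; apply: eq_bigr => l _; rewrite (hm_red _ (Hd l) (HE l)).
  have := Hdirect (fun l => poly_rV (P l %% char_poly (C l))) H' i.
  move/(cyc_indep (Hblock i)) => H0.
  by rewrite -(poly_rV_K (size_mod_char (C i) (P i))) H0 linear0.
have exP j : exists P : 'I_k -> {poly int}, g (e j) = \sum_(i < k) e i *m hm (P i).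
  by apply/inLP/gL/inLe.
pose Pf j := proj1_sig (constructive_indefinite_description _ (exP j)).
have HPf j : g (e j) = \sum_(i < k) e i *m hm (Pf j i).
  exact: (proj2_sig (constructive_indefinite_description _ (exP j))).
pose p i j := Pf j i %% char_poly (C i).
have Hgp j : g (e j) = \sum_(i < k) e i *m hm (p i j).
  by rewrite HPf; apply: eq_bigr => i _; rewrite (hm_mod _ (Hd i) (HE i)).
exists p; split.
- by move=> i j; exact: size_mod_char.
- by move=> j; rewrite Hgp; apply: eq_bigr => i _; rewrite polyactE.
- move=> p' Hs' Hp'; apply: functional_extensionality => i.
  apply: functional_extensionality => j.
  have H0 : \sum_(l < k) e l *m hm (p' l j - p l j) = 0.
    rewrite (eq_bigr (fun l => e l *m hm (p' l j) - e l *m hm (p l j))); last first.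
      by move=> l _; rewrite /hm rmorphB mulmxBr.
    rewrite sumrB -Hgp (Hp' j).
    by rewrite [X in _ - X](eq_bigr (fun l => e l *m hm (p' l j))) ?subrr // => l _; exact: polyactE.
  have := dz _ H0 i; rewrite modp_small; first by move/eqP; rewrite subr_eq0 => /eqP.
  rewrite size_char_poly ltnS (leq_trans (size_polyD _ _)) // size_polyN geq_max Hs'.
  exact: size_mod_char.
move=> p0 s Hs Hid.
have [m [Hm HMm]] := HMfin.
have Hsp i : char_poly (C i) = s i * p0 := Hs i.
have p0n0 (i : 'I_k) : p0 != 0.
  by move: (monic_neq0 (char_poly_monic (C i))); rewrite Hsp; apply: contraNneq => ->; rewrite mulr0.
have sn0 (i : 'I_k) : s i != 0.
  by move: (monic_neq0 (char_poly_monic (C i))); rewrite Hsp; apply: contraNneq => ->; rewrite mul0r.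
have Hfix j : g (e j *m hm p0) = e j *m hm p0.
  exact: (Hid j _ (@Bp_lemma n' M m Hm HMm (d j) (e j) (C j) (Hd j) (HE j) (s j) p0 (Hsp j))).
have Hz j : \sum_(i < k) e i *m hm ((p i j - (i == j)%:R) * p0) = 0.
  have := Hfix j; rewrite ghm ?inLe // Hgp mulmx_suml => H.
  rewrite (eq_bigr (fun i => e i *m hm (p i j) *m hm p0 - e i *m hm ((i == j)%:R * p0))); last first.
    move=> i _; rewrite mulrBl /hm rmorphB mulmxBr.
    by rewrite rmorphM -mulmxE mulmxA.
  rewrite sumrB H (sum_only (j:=j)) ?eqxx ?mul1r ?subrr // => i /negbTE ->.
  by rewrite mul0r /hm rmorph0 mulmx0.
pose q i j := ((p i j - (i == j)%:R) * p0) %/ char_poly (C i).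
have Hq' i j : p i j - (i == j)%:R = q i j * s i.
  have := Pdiv.IdomainMonic.divp_eq (char_poly_monic (C i)) ((p i j - (i == j)%:R) * p0).
  rewrite (dz _ (Hz j) i) addr0 -/(q i j) Hsp mulrA.
  by move/(mulIf (p0n0 i)).
have Hq i j : p i j = (i == j)%:R + s i * q i j.
  by rewrite mulrC -Hq' addrC subrK.
exists q; split => [i j|//|].
- have [->|q0] := eqVneq (q i j) 0; first by rewrite size_poly0 size_poly_gt0 (p0n0 i).
  have e1 : size (s i * q i j) = (size (s i) + size (q i j)).-1 := size_mul (sn0 i) q0.
  have e2 : (d i).+1 = (size (s i) + size p0).-1.
    by rewrite -(size_char_poly (C i)) Hsp size_mul // p0n0.
  have e3 : (size (s i * q i j)%R <= d i)%N.
    rewrite mulrC -Hq' (leq_trans (size_polyD _ _)) // size_polyN geq_max size_mod_char /=.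
    by case: eqP => _; rewrite ?size_poly1 ?size_poly0 // Hd.
  have s1 : (0 < size (s i))%N by rewrite size_poly_gt0 sn0.
  have q1 : (0 < size (q i j))%N by rewrite size_poly_gt0.
  rewrite e1 in e3; move: e2 e3; rewrite -!subn1.
  move: s1 q1; move: (size (s i)) (size p0) (size (q i j)) (d i) => a b c x; lia.
move=> xi _ Hroot GC HGC j.
set MC := map_mx toC M.
have gMt v t : inL v -> g (v *m M ^+ t) = g v *m M ^+ t.
  by move=> Hv; have := ghm v 'X^t Hv; rewrite /hm rmorphXn /= horner_mx_X.
have inLMt v t : inL v -> inL (v *m M ^+ t).
  by move=> Hv; have := inLhm v 'X^t Hv; rewrite /hm rmorphXn /= horner_mx_X.
pose h i := map_poly toC (pLam (C i)) %/ ('X - xi%:P).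
have hdiv i : h i * ('X - xi%:P) = map_poly toC (pLam (C i)).
  apply: divpK; rewrite dvdp_XsubCl /root /pLam Hsp /toC rmorphM /= hornerM.
  by move: Hroot => /rootP; rewrite /toC => ->; rewrite mulr0.
pose W i := map_mx toC (e i) *m horner_mx MC (h i).
have Hveig i : veig M (pLam (C i)) (e i) xi = W i by rewrite /veig polyactE.
have Weig i : W i *m MC = xi *: W i.
  have : W i *m horner_mx MC ('X - xi%:P) = 0.
    rewrite /W -mulmxA.
    rewrite mulmxE -rmorphM /= hdiv /MC /toC.
    rewrite -(map_horner_mx (intr : {rmorphism int -> algC})).
    rewrite -(map_mxM (intr : {rmorphism int -> algC})) /pLam (cyc_CH (Hd i) (HE i)).
    by rewrite map_mx0.
  rewrite rmorphB /= horner_mx_X horner_mx_C mulmxBr mul_mx_scalar => /eqP.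
  by rewrite subr_eq0 => /eqP.
have LHS : W j *m GC = map_mx toC (g (e j)) *m horner_mx MC (h j).
  rewrite /W -!polyactE /polyact mulmx_suml; apply: eq_bigr => t _.
  rewrite -scalemxAl; congr (_ *: _).
  rewrite /MC -(map_mxXn (intr : {rmorphism int -> algC})).
  rewrite -(map_mxM (intr : {rmorphism int -> algC})) -HGC; last exact: inLMt (inLe j).
  by rewrite gMt ?inLe // (map_mxM (intr : {rmorphism int -> algC})) map_mxXn.
have KEY i : map_poly toC (p i j) * h j = map_poly toC ((i == j)%:R + s j * q i j) * h i.
  apply: (mulIf (_ : 'X - xi%:P != 0)); first by rewrite polyXsubC_eq0.
  rewrite -!mulrA !hdiv /toC -!rmorphM; congr (map_poly _ _).
  rewrite /pLam !Hsp Hq; case: (eqVneq i j) => [->//|nij].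
  rewrite /= !add0r; ring.
rewrite Hveig LHS Hgp /toC (map_mx_sum (intr : {rmorphism int -> algC})) mulmx_suml.
apply: eq_bigr => i _; rewrite Hveig.
rewrite (map_mxM (intr : {rmorphism int -> algC})) (map_horner_mx (intr : {rmorphism int -> algC})).
rewrite -mulmxA mulmxE -rmorphM /= KEY mulrC rmorphM /= -mulmxE mulmxA.
exact: (eig_hm _ (Weig i)).
Qed.
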